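(* Let $(X,\{\tau_n:n<\omega\})$ be a GLP-space in which the topologies are $T_3$, and let $n<\omega$. For any $A,B\subseteq X$: $A\vdash_n B$ if and only if $c_n(A)\subseteq c_n(B)$ or $B\not\subseteq d_n(X)$.
   Context: For a topology $\tau_n$ on $X$, $d_n(A)$ denotes the set of limit points of $A\subseteq X$ (the derivative) and $c_n(A)$ the closure of $A$ with respect to $\tau_n$. A GLP-space is a nonempty set $X$ with topologies $\tau_n$, $n<\omega$, such that the powerset boolean algebra $({\mathcal P}(X),\{d_n\})$ is a GLP-algebra, i.e. for all $n$, all $m<n$ and all $x,y\subseteq X$: $d_n(x\cup y)=d_n(x)\cup d_n(y)$; $d_n(\emptyset)=\emptyset$; $d_n(x)=d_n(x\setminus d_n(x))$; $d_n(x)\subseteq d_m(x)$; $d_m(x)\subseteq X\setminus d_n(X\setminus d_m(x))$. For $A,B\subseteq X$, $A\vdash_n B$ means: for every $Z\subseteq X$, if $B\subseteq d_n(Z)$ then $A\subseteq d_n(Z)$. *)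

(* Defs.v *)
From Stdlib Require Import Classical.
Set Implicit Arguments.

Definition subset {X : Type} (A B : X -> Prop) : Prop := forall x, A x -> B x.
Definition set_eq {X : Type} (A B : X -> Prop) : Prop := forall x, A x <-> B x.
Definition setU {X : Type} (A B : X -> Prop) : X -> Prop := fun x => A x \/ B x.
Definition setD {X : Type} (A B : X -> Prop) : X -> Prop := fun x => A x /\ ~ B x.
Definition setC {X : Type} (A : X -> Prop) : X -> Prop := fun x => ~ A x.
Definition setT {X : Type} : X -> Prop := fun _ => True.
Definition set0 {X : Type} : X -> Prop := fun _ => False.

Record topology (X : Type) := Topology {
  open : (X -> Prop) -> Prop;
  open_full : open (fun _ => True);
  open_inter : forall U V, open U -> open V -> open (fun x => U x /\ V x);
  open_union : forall F : (X -> Prop) -> Prop,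
      (forall U, F U -> open U) -> open (fun x => exists U, F U /\ U x)
}.

Definition closed {X : Type} (t : topology X) (F : X -> Prop) : Prop :=
  open t (setC F).

Definition deriv {X : Type} (t : topology X) (A : X -> Prop) : X -> Prop :=
  fun x => forall U, open t U -> U x -> exists y, U y /\ y <> x /\ A y.

Definition closure {X : Type} (t : topology X) (A : X -> Prop) : X -> Prop :=
  fun x => forall U, open t U -> U x -> exists y, U y /\ A y.

Definition T1 {X : Type} (t : topology X) : Prop :=
  forall x : X, closed t (fun y => y = x).

Definition regular {X : Type} (t : topology X) : Prop :=
  forall (F : X -> Prop) (x : X), closed t F -> ~ F x ->
    exists U V, open t U /\ open t V /\ U x /\ subset F V /\
                (forall y, U y -> V y -> False).

Definition T3 {X : Type} (t : topology X) : Prop := T1 t /\ regular t.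

Definition GLP_algebra {X : Type} (d : nat -> (X -> Prop) -> (X -> Prop)) : Prop :=
  forall n (x y : X -> Prop),
    set_eq (d n (setU x y)) (setU (d n x) (d n y)) /\
    set_eq (d n set0) set0 /\
    set_eq (d n x) (d n (setD x (d n x))) /\
    (forall m, m < n ->
       subset (d n x) (d m x) /\
       subset (d m x) (setC (d n (setC (d m x))))).

Definition GLP_space {X : Type} (tau : nat -> topology X) : Prop :=
  (exists x : X, True) /\ GLP_algebra (fun n => deriv (tau n)).

Definition vdash {X : Type} (tau : nat -> topology X) (n : nat) (A B : X -> Prop) : Prop :=
  forall Z : X -> Prop, subset B (deriv (tau n) Z) -> subset A (deriv (tau n) Z).

(* Main.v *)
Require Import Defs.
From Stdlib Require Import Classical.
From Stdlib Require Import FunctionalExtensionality PropExtensionality.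

Lemma deriv_closed_under_closure {X : Type} (t : topology X) (HT1 : T1 t) (Z : X -> Prop) x :
  closure t (deriv t Z) x -> deriv t Z x.
Proof.
  intros Hc. apply NNPP; intros Hn.
  unfold deriv in Hn.
  apply not_all_ex_not in Hn as [U HU].
  apply imply_to_and in HU as [HUo HU].
  apply imply_to_and in HU as [HUx HU].
  destruct (Hc U HUo HUx) as [y [HUy Hy]].
  destruct (classic (y = x)) as [->|Hyx].
  - apply HU. destruct (Hy U HUo HUy) as [z [? [? ?]]]. exists z; auto.
  - assert (Ho : open t (fun w => U w /\ ~ (w = x))).
    { apply open_inter; auto. apply HT1. }
    destruct (Hy _ Ho (conj HUy Hyx)) as [z [[HUz Hzx] [_ HZz]]].
    apply HU. exists z; auto.
Qed.

Lemma nn_open {X : Type} (t : topology X) (P : X -> Prop) :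
  open t P -> open t (fun x => ~ ~ P x).
Proof.
  intros H.
  replace (fun x => ~ ~ P x) with P; auto.
  apply functional_extensionality; intros x; apply propositional_extensionality.
  split; [tauto| apply NNPP].
Qed.

Theorem mainTheorem5 (X : Type) (tau : nat -> topology X)
  (Hglp : GLP_space tau) (HT3 : forall k, T3 (tau k)) (n : nat)
  (A B : X -> Prop) :
  vdash tau n A B <->
  (subset (closure (tau n) A) (closure (tau n) B) \/
   ~ subset B (deriv (tau n) setT)).
Proof.
  destruct (HT3 n) as [HT1 Hreg].
  set (t := tau n) in *.
  split.
  - intros Hv.
    destruct (classic (subset B (deriv t setT))) as [HB|HB]; [left|right; exact HB].
    assert (HA : forall a, A a -> closure t B a).
    { intros a Aa. apply NNPP; intros Hna.
      set (F' := fun U => open t U /\ forall y, U y -> ~ B y).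
      set (F := fun x => ~ exists U, F' U /\ U x).
      assert (HF : closed t F).
      { unfold closed, setC, F. apply nn_open. apply open_union.
        intros U [? ?]; auto. }
      assert (HFa : ~ F a).
      { unfold F; intros H; apply H.
        unfold closure in Hna.
        apply not_all_ex_not in Hna as [U HU].
        apply imply_to_and in HU as [HUo HU].
        apply imply_to_and in HU as [HUx HU].
        exists U; split; [split; auto|auto].
        intros y Uy By; apply HU; exists y; auto. }
      destruct (Hreg F a HF HFa) as [U [V [HUo [HVo [HUa [HFV Hdis]]]]]].
      assert (HBV : subset B (deriv t V)).
      { intros b Bb W HWo HWb.
        assert (Hb : F b).
        { intros [U' [[_ HU'] HU'b]]. exact (HU' b HU'b Bb). }
        destruct (HB b Bb (fun w => W w /\ V w) (open_inter _ _ _ HWo HVo)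
                   (conj HWb (HFV b Hb))) as [y [[? ?] [? _]]].
        exists y; auto. }
      destruct (Hv V HBV a Aa U HUo HUa) as [y [Uy [_ Vy]]].
      exact (Hdis y Uy Vy). }
    intros x Hx W HWo HWx.
    destruct (Hx W HWo HWx) as [a [Wa Aa]].
    exact (HA a Aa W HWo Wa).
  - intros [H|H] Z HBZ.
    + intros a Aa. apply deriv_closed_under_closure; auto.
      intros U HUo HUa.
      assert (Hc : closure t A a) by (intros U' ? ?; exists a; auto).
      destruct (H a Hc U HUo HUa) as [b [Ub Bb]].
      exists b; auto.
    + exfalso. apply H. intros b Bb U HUo HUb.
      destruct (HBZ b Bb U HUo HUb) as [y [? [? _]]].
      exists y; repeat split; auto.
Qed.
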